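(* Let $\mathcal A: f=0$ be an arrangement of $d$ lines in $\mathbb P^2$ and let $m$ be the multiplicity of one of its intersection points. Then either $mdr(f)=d-m$, or $mdr(f)\le d-m-1$ and one of the following two cases occurs: (1) $mdr(f)\le m-1$; then in fact $mdr(f)=m-1$, one has $2m<d+1$, and $\mathcal A$ is free with exponents $d_1=mdr(f)=m-1$ and $d_2=d-m$; (2) $m\le mdr(f)\le d-m-1$, in particular $2m<d$.
   Context: A line arrangement $\mathcal A: f=0$ is a finite set of distinct lines, $f\in\mathbb C[x,y,z]$ the product of their linear forms, $d=\deg f$ the number of lines. The multiplicity of an intersection point is the number of lines of $\mathcal A$ through it. $mdr(f)$ is the smallest integer $r\ge 0$ such that there exist homogeneous $a,b,c$ of degree $r$, not all zero, with $af_x+bf_y+cf_z=0$. The curve is free if the module $AR(f)=\{(a,b,c)\in S^3: af_x+bf_y+cf_z=0\}$ is a free $S$-module (of rank 2) generated by homogeneous syzygies of degrees $d_1\le d_2$, called the exponents. *)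

(* Defs.v *)
From HB Require Import structures.
From mathcomp Require Import all_boot all_order all_algebra.
From mathcomp Require Import reals.
From mathcomp Require Import complex.
From mathcomp Require Import mpoly.
Set Implicit Arguments. Unset Strict Implicit. Unset Printing Implicit Defensive.
Import Order.TTheory GRing.Theory Num.Theory.
Local Open Scope ring_scope.

Section LineArr.
Variable R : realType.
Local Notation C := (complex R).
Local Notation S := {mpoly C[3]}.

Definition linform (v : 'I_3 -> C) : S := \sum_(i < 3) v i *: 'X_i.

Definition is_line_arrangement (L : seq ('I_3 -> C)) : Prop :=
  (forall j, (j < size L)%N -> exists k, (nth (fun _ => 0) L j) k != 0) /\
  (forall i j, (i < size L)%N -> (j < size L)%N -> i <> j ->
     forall lam : C, ~ (forall k, (nth (fun _ => 0) L j) k = lam * (nth (fun _ => 0) L i) k)).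

Definition arr_poly (L : seq ('I_3 -> C)) : S := \prod_(v <- L) linform v.

Definition on_line (p v : 'I_3 -> C) : bool := \sum_(i < 3) v i * p i == 0.

Definition mult_pt (L : seq ('I_3 -> C)) (p : 'I_3 -> C) : nat :=
  count (on_line p) L.

Definition is_intersection_point (L : seq ('I_3 -> C)) (p : 'I_3 -> C) : Prop :=
  (exists i, p i != 0) /\ (2 <= mult_pt L p)%N.

Definition is_syzygy (f : S) (rho : 'I_3 -> S) : Prop :=
  \sum_(i < 3) rho i * mderiv i f = 0.

Definition homog_triple (r : nat) (rho : 'I_3 -> S) : Prop :=
  forall i, rho i \is r.-homog.

Definition mdr_is (f : S) (r : nat) : Prop :=
  (exists rho, homog_triple r rho /\ is_syzygy f rho /\ exists i, rho i != 0) /\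
  (forall r', (r' < r)%N -> forall rho, homog_triple r' rho -> is_syzygy f rho ->
                 forall i, rho i = 0).

(* AR(f) is a free S-module of rank 2 with basis homogeneous syzygies of
   degrees d1 <= d2 *)
Definition free_with_exponents (f : S) (d1 d2 : nat) : Prop :=
  (d1 <= d2)%N /\
  exists rho1 rho2 : 'I_3 -> S,
    [/\ homog_triple d1 rho1 /\ homog_triple d2 rho2,
        is_syzygy f rho1 /\ is_syzygy f rho2,
        (forall rho, is_syzygy f rho ->
           exists h1 h2 : S, forall i, rho i = h1 * rho1 i + h2 * rho2 i) &
        (forall h1 h2 : S, (forall i, h1 * rho1 i + h2 * rho2 i = 0) ->
           h1 = 0 /\ h2 = 0)].

End LineArr.

(* Main.v *)
Require Import Defs.
From HB Require Import structures.
From mathcomp Require Import all_boot all_order all_algebra.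
From mathcomp Require Import reals complex mpoly.
From mathcomp Require Import ring.
From mathcomp Require Import zify.
Set Implicit Arguments. Unset Strict Implicit. Unset Printing Implicit Defensive.
Import Order.TTheory GRing.Theory Num.Theory.
Local Open Scope ring_scope.

Section Dev.
Variable R : realType.
Local Notation C := (complex R).
Local Notation S := {mpoly C[3]}.
Local Notation F := {ffun 'I_3 -> C}.
Implicit Types (u v w : F) (p : 'I_3 -> C) (P Q : S) (s : seq F).

Definition i0 : 'I_3 := @Ordinal 3 0 isT.
Definition i1 : 'I_3 := @Ordinal 3 1 isT.
Definition i2 : 'I_3 := @Ordinal 3 2 isT.

Lemma ord3P (i : 'I_3) : [\/ i = i0, i = i1 | i = i2].
Proof.
case: i => [[|[|[|//]]] Hi].
- by constructor 1; apply: val_inj.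
- by constructor 2; apply: val_inj.
- by constructor 3; apply: val_inj.
Qed.

Lemma sum3 (V : nmodType) (F : 'I_3 -> V) : \sum_(i < 3) F i = F i0 + F i1 + F i2.
Proof.
rewrite !big_ord_recr big_ord0 /= add0r.
by congr (F _ + F _ + F _); apply: val_inj.
Qed.

Lemma mderivXX (i j : 'I_3) : mderiv i ('X_j : S) = (i == j)%:R%:MP.
Proof.
rewrite mderivX mnm1E; case: (eqVneq j i) => [->|ne].
  rewrite (_ : (_ - _)%MM = 0%MM); last by apply/mnmP=> k; rewrite mnmBE subnn mnm0E.
  by rewrite mpolyX0 -mul_mpolyC mulr1.
by rewrite scale0r raddf0.
Qed.

Lemma mderiv_linform (i : 'I_3) (v : 'I_3 -> C) : mderiv i (linform v) = (v i)%:MP.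
Proof.
rewrite /linform raddf_sum /=.
rewrite (bigD1 i) //= big1 ?addr0.
  by rewrite mderivZ mderivXX eqxx -mul_mpolyC -rmorphM mulr1.
move=> j /negbTE; rewrite mderivZ mderivXX eq_sym => ->.
by rewrite scaler0.
Qed.


Definition Der (rho : 'I_3 -> S) (P : S) : S := \sum_(i < 3) rho i * mderiv i P.

Lemma DerD rho P Q : Der rho (P + Q) = Der rho P + Der rho Q.
Proof. by rewrite /Der -big_split /=; apply: eq_bigr => i _; rewrite mderivD mulrDr. Qed.

Lemma DerN rho P : Der rho (- P) = - Der rho P.
Proof. by rewrite /Der -sumrN; apply: eq_bigr => i _; rewrite mderivN mulrN. Qed.

Lemma DerM rho P Q : Der rho (P * Q) = Der rho P * Q + P * Der rho Q.
Proof.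
rewrite /Der mulr_suml mulr_sumr -big_split /=; apply: eq_bigr => i _.
by rewrite mderivM; ring.
Qed.

Lemma DerC rho c : Der rho c%:MP = 0.
Proof. by rewrite /Der big1 // => i _; rewrite mderivC mulr0. Qed.

Lemma DerZ rho c P : Der rho (c *: P) = c *: Der rho P.
Proof. by rewrite -!mul_mpolyC DerM DerC mul0r add0r. Qed.

Lemma Der_lin rho (v : 'I_3 -> C) : Der rho (linform v) = \sum_(i < 3) rho i * (v i)%:MP.
Proof. by apply: eq_bigr => i _; rewrite mderiv_linform. Qed.

Lemma Der_lincomb (a b : S) (x y : 'I_3 -> S) P :
  Der (fun i => a * x i + b * y i) P = a * Der x P + b * Der y P.
Proof. by rewrite /Der !sum3; ring. Qed.

Definition Xv : 'I_3 -> S := fun i => 'X_i.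
Definition cv (p : 'I_3 -> C) : 'I_3 -> S := fun i => (p i)%:MP.

Lemma Der_Xv_lin v : Der Xv (linform v) = linform v.
Proof. by rewrite Der_lin; apply: eq_bigr => i _; rewrite mulrC mul_mpolyC. Qed.

Lemma Der_cv_lin p v : Der (cv p) (linform v) = (\sum_(i < 3) v i * p i)%:MP.
Proof. by rewrite Der_lin rmorph_sum; apply: eq_bigr => i _; rewrite /cv -rmorphM mulrC. Qed.

Definition onl p : pred F := fun v => on_line p v.

Definition lprod (s : seq F) : S := \prod_(v <- s) linform v.

Lemma Euler_prod s : Der Xv (lprod s) = (size s)%:R * lprod s.
Proof.
elim: s => [|v s IH]; first by rewrite /lprod big_nil -(rmorph1 (@mpolyC 3 C)) DerC mul0r.
rewrite /lprod big_cons DerM Der_Xv_lin -/(lprod s) IH /=.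
by rewrite mulrSr; ring.
Qed.

Lemma Der_cv_prod0 p s : all (onl p) s -> Der (cv p) (lprod s) = 0.
Proof.
elim: s => [|v s IH]; first by rewrite /lprod big_nil -(rmorph1 (@mpolyC 3 C)) DerC.
rewrite /= => /andP[ov /IH {}IH].
rewrite /lprod big_cons DerM -/(lprod s) IH Der_cv_lin.
move: ov; rewrite /onl /on_line => /eqP ov.
rewrite (_ : \sum_(i < 3) v i * p i = 0) ?raddf0; first by ring.
exact: ov.
Qed.


Definition nzv (v : F) := exists k, v k != 0.
Definition piv (v : F) : 'I_3 := odflt i0 [pick k | v k != 0].

Lemma piv_neq0 v : nzv v -> v (piv v) != 0.
Proof. by case=> k Hk; rewrite /piv; case: pickP => [j //|/(_ k)]; rewrite Hk. Qed.

Definition sub (v : F) : 3.-tuple S :=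
  [tuple 'X_j - ((j == piv v)%:R / v (piv v)) *: linform v | j < 3].

Lemma comp_X v j : ('X_j : S) \mPo sub v = 'X_j - ((j == piv v)%:R / v (piv v)) *: linform v.
Proof. by rewrite comp_mpolyXU -tnth_nth tnth_mktuple. Qed.

Lemma linform_sub (a b : F) c : linform [ffun j => a j - c * b j] = linform a - c *: linform b.
Proof.
rewrite /linform scaler_sumr -sumrB; apply: eq_bigr => i _.
by rewrite ffunE scalerBl scalerA.
Qed.

Lemma mcoeff_linform (u : 'I_3 -> C) i : (linform u)@_U_(i) = u i.
Proof.
rewrite /linform raddf_sum /= (bigD1 i) //= big1 ?addr0.
  by rewrite mcoeffZ mcoeffXU eqxx mulr1.
by move=> j /negbTE nji; rewrite mcoeffZ mcoeffXU nji mulr0.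
Qed.

Lemma linform_eq0 u : linform u = 0 -> forall i, u i = 0.
Proof. by move=> H i; rewrite -mcoeff_linform H mcoeff0. Qed.

Lemma linform_neq0 u : nzv u -> linform u != 0.
Proof. by case=> k Hk; apply/eqP => /linform_eq0 /(_ k) /eqP; rewrite (negbTE Hk). Qed.

Lemma comp_lin v w : linform w \mPo sub v = linform w - (w (piv v) / v (piv v)) *: linform v.
Proof.
rewrite {1}/linform raddf_sum /=.
under eq_bigr => j _ do rewrite comp_mpolyZ comp_X scalerBr scalerA.
rewrite sumrB -/(linform w) -scaler_suml; congr (_ - _ *: _).
rewrite (bigD1 (piv v)) //= big1 ?addr0; first by rewrite eqxx mul1r.
by move=> j /negbTE ->; rewrite mul0r mulr0.
Qed.

Lemma comp_self v : nzv v -> linform v \mPo sub v = 0.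
Proof. by move=> nz; rewrite comp_lin divff ?piv_neq0 // scale1r subrr. Qed.

Definition NP (v w : F) := forall lam : C, ~ (forall k, w k = lam * v k).

Lemma comp_other v w : nzv v -> NP v w -> linform w \mPo sub v != 0.
Proof.
move=> nz np; apply/eqP; rewrite comp_lin -linform_sub => /linform_eq0 H.
apply: (np (w (piv v) / v (piv v))) => k; move: (H k) => /eqP; rewrite ffunE subr_eq0 => /eqP.
by [].
Qed.

Lemma compM (lq : 3.-tuple S) P Q : (P * Q) \mPo lq = (P \mPo lq) * (Q \mPo lq).
Proof. exact: rmorphM. Qed.

Definition Good v (P : S) := exists Q, P - (P \mPo sub v) = linform v * Q.

Lemma GoodD v P Q : Good v P -> Good v Q -> Good v (P + Q).
Proof. by case=> a Ha [b Hb]; exists (a + b); rewrite comp_mpolyD mulrDr -Ha -Hb opprD addrACA. Qed.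

Lemma GoodM v P Q : Good v P -> Good v Q -> Good v (P * Q).
Proof.
case=> a Ha [b Hb]; exists (P * b + a * (Q \mPo sub v)).
rewrite rmorphM /= mulrDr mulrCA -Hb mulrA -Ha.
by rewrite mulrBr mulrBl addrA subrK.
Qed.

Lemma GoodZ v c P : Good v P -> Good v (c *: P).
Proof. by case=> a Ha; exists (c *: a); rewrite comp_mpolyZ -scalerBr Ha scalerAr. Qed.

Lemma Good1 v : Good v 1.
Proof. by exists 0; rewrite comp_mpoly1 subrr mulr0. Qed.

Lemma GoodX v j : Good v 'X_j.
Proof.
exists (((j == piv v)%:R / v (piv v))%:MP); rewrite comp_X [RHS]mulrC mul_mpolyC.
by rewrite opprB addrC subrK.
Qed.

Lemma Good_all v P : Good v P.
Proof.
rewrite [P]mpolyE; apply: (big_ind (Good v)).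
- by exists 0; rewrite raddf0 subrr mulr0.
- exact: GoodD.
move=> m _; apply: GoodZ; rewrite mpolyXE_id.
apply: (big_ind (Good v)); [exact: Good1 | exact: GoodM |].
move=> i _; elim: (m i) => [|e IH]; first by rewrite expr0; exact: Good1.
rewrite exprS; apply: GoodM; [exact: GoodX | exact: IH].
Qed.

Lemma divP v P : P \mPo sub v = 0 -> exists Q, P = linform v * Q.
Proof. by move=> H; case: (Good_all v P) => Q; rewrite H subr0 => ->; exists Q. Qed.

Lemma comp_dvd v Q : nzv v -> (linform v * Q) \mPo sub v = 0.
Proof. by move=> nz; rewrite rmorphM /= comp_self // mul0r. Qed.


Lemma cancel_lin w v P : nzv w -> NP w v -> (linform v * P) \mPo sub w = 0 -> P \mPo sub w = 0.
Proof.
move=> nzw np; rewrite rmorphM /= => /eqP; rewrite mulf_eq0 => /orP[|/eqP//].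
by rewrite (negbTE (comp_other nzw np)).
Qed.

Lemma lprod_comp_neq0 w s : nzv w -> (forall v, v \in s -> NP w v) -> lprod s \mPo sub w != 0.
Proof.
move=> nzw H; rewrite /lprod rmorph_prod /= prodf_seq_neq0; apply/allP => v vs /=.
exact: comp_other (H v vs).
Qed.

Lemma lprod_neq0 s : (forall v, v \in s -> nzv v) -> lprod s != 0.
Proof. by move=> H; rewrite /lprod prodf_seq_neq0; apply/allP => v vs /=; exact: linform_neq0 (H v vs). Qed.

Lemma proddiv s P : (forall v, v \in s -> nzv v) -> uniq s ->
  (forall v w, v \in s -> w \in s -> v != w -> NP v w) ->
  (forall v, v \in s -> P \mPo sub v = 0) -> exists Q, P = lprod s * Q.
Proof.
elim: s P => [|v s IH] P nz un np H.
  by exists P; rewrite /lprod big_nil mul1r.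
have [P1 HP1] := divP (H v (mem_head _ _)).
move: un => /= /andP[vns un].
have [Q HQ] : exists Q, P1 = lprod s * Q.
  apply: IH => //.
  - by move=> w ws; apply: nz; rewrite inE ws orbT.
  - by move=> w1 w2 w1s w2s; apply: np; rewrite inE ?w1s ?w2s orbT.
  move=> w ws; apply: (@cancel_lin w v); first by apply: nz; rewrite inE ws orbT.
    apply: np; rewrite ?inE ?eqxx ?ws ?orbT //.
    by apply/eqP => E; move: vns; rewrite -E ws.
  by rewrite -HP1; apply: H; rewrite inE ws orbT.
by exists Q; rewrite HP1 HQ /lprod big_cons mulrA.
Qed.

Definition arrF (Lf : seq F) :=
  [/\ (forall v, v \in Lf -> nzv v), uniq Lf &
      (forall v w, v \in Lf -> w \in Lf -> v != w -> NP v w)].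

Definition tof (v : 'I_3 -> C) : F := [ffun i => v i].

Lemma linform_tof (v : 'I_3 -> C) : linform (tof v) = linform v.
Proof. by apply: eq_bigr => i _; rewrite ffunE. Qed.

Lemma arr_arrF (L : seq ('I_3 -> C)) : is_line_arrangement L -> arrF (map tof L).
Proof.
have memL : forall v, v \in map tof L -> exists2 i, (i < size L)%N & v = tof (nth (fun _ => 0) L i).
  move=> v vL; case: (nthP (tof (fun _ => 0)) vL) => i; rewrite size_map => iL <-.
  by exists i => //; rewrite (nth_map (fun _ => 0)).
case=> H1 H2; split.
- move=> v /memL [i iL ->]; have [k Hk] := H1 i iL.
  by exists k; rewrite ffunE.
- apply/negPn/negP => /(uniqPn (tof (fun _ => 0))) [i [j [ij jL E]]].
  rewrite size_map in jL.
  have ne : i <> j by move=> Eij; move: ij; rewrite Eij ltnn.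
  apply: (H2 i j (ltn_trans ij jL) jL ne 1) => k.
  move: E => /(congr1 (fun f : F => f k)).
  by rewrite !(nth_map (fun _ => 0)) ?(ltn_trans ij jL) // !ffunE mul1r => ->.
- move=> v w /memL [i iL ->] /memL [j jL ->] ab lam Hl.
  have ne : i <> j by move=> E; move: ab; rewrite E eqxx.
  apply: (H2 i j iL jL ne lam) => k; by have := Hl k; rewrite !ffunE.
Qed.

Lemma arr_split Lf p : lprod Lf =
  lprod [seq v <- Lf | onl p v] * lprod [seq v <- Lf | ~~ onl p v].
Proof. by rewrite /lprod !big_filter (bigID (onl p)). Qed.

Lemma syz_line Lf rho v : arrF Lf -> v \in Lf -> Der rho (lprod Lf) = 0 ->
  Der rho (linform v) \mPo sub v = 0.
Proof.
move=> [nz un np] vL HD.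
have nzv_ := nz v vL.
have E : lprod Lf = linform v * lprod (rem v Lf) by rewrite /lprod (big_rem _ vL).
move: HD; rewrite E DerM => /(congr1 (comp_mpoly (sub v))).
rewrite raddf0 rmorphD !rmorphM /= comp_self // mul0r addr0 => /eqP.
rewrite mulf_eq0 => /orP[/eqP //|].
rewrite (negbTE (lprod_comp_neq0 _ _)) // => w.
rewrite mem_rem_uniq // inE => /andP[wv wL].
by apply: np; rewrite // eq_sym.
Qed.

Definition detp (a b c : 'I_3 -> S) : S :=
  a i0 * (b i1 * c i2 - b i2 * c i1) - a i1 * (b i0 * c i2 - b i2 * c i0)
  + a i2 * (b i0 * c i1 - b i1 * c i0).

Lemma det_kill (a b c : 'I_3 -> S) v k :
  \sum_(i < 3) a i * (v i)%:MP = 0 -> \sum_(i < 3) b i * (v i)%:MP = 0 ->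
  \sum_(i < 3) c i * (v i)%:MP = 0 -> detp a b c * (v k)%:MP = 0.
Proof.
rewrite !sum3 /detp.
set x0 := (v i0)%:MP; set x1 := (v i1)%:MP; set x2 := (v i2)%:MP.
move=> ha hb hc.
case: (ord3P k) => ->; rewrite -/x0 -/x1 -/x2.
- transitivity ((b i1 * c i2 - b i2 * c i1) * (a i0 * x0 + a i1 * x1 + a i2 * x2)
    - (a i1 * c i2 - a i2 * c i1) * (b i0 * x0 + b i1 * x1 + b i2 * x2)
    + (a i1 * b i2 - a i2 * b i1) * (c i0 * x0 + c i1 * x1 + c i2 * x2)); first by ring.
  by rewrite ha hb hc !mulr0 subrr addr0.
- transitivity (- (b i0 * c i2 - b i2 * c i0) * (a i0 * x0 + a i1 * x1 + a i2 * x2)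
    + (a i0 * c i2 - a i2 * c i0) * (b i0 * x0 + b i1 * x1 + b i2 * x2)
    - (a i0 * b i2 - a i2 * b i0) * (c i0 * x0 + c i1 * x1 + c i2 * x2)); first by ring.
  by rewrite ha hb hc !mulr0 addr0 subrr.
- transitivity ((b i0 * c i1 - b i1 * c i0) * (a i0 * x0 + a i1 * x1 + a i2 * x2)
    - (a i0 * c i1 - a i1 * c i0) * (b i0 * x0 + b i1 * x1 + b i2 * x2)
    + (a i0 * b i1 - a i1 * b i0) * (c i0 * x0 + c i1 * x1 + c i2 * x2)); first by ring.
  by rewrite ha hb hc !mulr0 subrr addr0.
Qed.


Lemma comp_detp v a b c : detp a b c \mPo sub v =
  detp (fun i => a i \mPo sub v) (fun i => b i \mPo sub v) (fun i => c i \mPo sub v).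
Proof. by rewrite /detp rmorphD rmorphB !rmorphM !rmorphB !rmorphM. Qed.

Lemma comp_sum_lin v (a : 'I_3 -> S) :
  \sum_(i < 3) (a i \mPo sub v) * (v i)%:MP = (\sum_(i < 3) a i * (v i)%:MP) \mPo sub v.
Proof. by rewrite rmorph_sum; apply: eq_bigr => i _; rewrite rmorphM /= comp_mpolyC. Qed.

Lemma Q_vanish Lf p rho v : arrF Lf -> v \in Lf -> onl p v -> Der rho (lprod Lf) = 0 ->
  detp (cv p) Xv rho \mPo sub v = 0.
Proof.
move=> HL vL ov HD; have nz := (let: And3 a _ _ := HL in a) v vL.
have : detp (fun i => cv p i \mPo sub v) (fun i => Xv i \mPo sub v)
          (fun i => rho i \mPo sub v) * (v (piv v))%:MP = 0.
  apply: det_kill; rewrite comp_sum_lin.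
  - rewrite (_ : \sum_(i < 3) _ = (\sum_(i < 3) v i * p i)%:MP).
      by move: ov; rewrite /onl /on_line => /eqP ->; rewrite comp_mpolyC raddf0.
    by rewrite rmorph_sum; apply: eq_bigr => i _; rewrite /cv -rmorphM mulrC.
  - rewrite (_ : \sum_(i < 3) _ = linform v) ?comp_self //.
    by apply: eq_bigr => i _; rewrite /Xv mulrC mul_mpolyC.
  - by rewrite -Der_lin (syz_line HL vL HD).
rewrite -comp_detp => /eqP; rewrite mulf_eq0 mpolyC_eq0 (negbTE (piv_neq0 nz)) orbF.
by move/eqP.
Qed.

Lemma Q_div Lf p rho : arrF Lf -> Der rho (lprod Lf) = 0 ->
  exists q, detp (cv p) Xv rho = lprod [seq v <- Lf | onl p v] * q.
Proof.
move=> HL HD; have [nz un np] := HL.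
apply: proddiv.
- by move=> v; rewrite mem_filter => /andP[_ /nz].
- exact: filter_uniq.
- by move=> v w; rewrite !mem_filter => /andP[_ vL] /andP[_ wL]; apply: np.
by move=> v; rewrite mem_filter => /andP[ov vL]; apply: (Q_vanish HL).
Qed.


Lemma detp_shift (a b c : 'I_3 -> S) (s t : S) :
  detp a (fun i => b i - s * a i) (fun i => c i - t * a i) = detp a b c.
Proof. by rewrite /detp; ring. Qed.

Lemma minor_rel (a b c : 'I_3 -> S) k : detp a b c = 0 -> b k = 0 -> c k = 0 -> a k != 0 ->
  forall i j, b i * c j = b j * c i.
Proof.
rewrite /detp => D bk ck ak.
have step : forall x y, a k * (b x * c y - b y * c x) = 0 -> b x * c y = b y * c x.
  move=> x y /eqP; rewrite mulf_eq0 (negbTE ak) /= subr_eq0 => /eqP //.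
case: (ord3P k) => Ek; subst k; rewrite ?bk ?ck in D.
- have key : b i1 * c i2 = b i2 * c i1.
    by apply: step; rewrite -D; ring.
  by move=> i j; case: (ord3P i) => ->; case: (ord3P j) => ->; rewrite ?bk ?ck ?mul0r ?mulr0 // key.
- have key : b i0 * c i2 = b i2 * c i0.
    by apply: step; rewrite -[RHS]oppr0 -D; ring.
  by move=> i j; case: (ord3P i) => ->; case: (ord3P j) => ->; rewrite ?bk ?ck ?mul0r ?mulr0 // key.
- have key : b i0 * c i1 = b i1 * c i0.
    by apply: step; rewrite -D; ring.
  by move=> i j; case: (ord3P i) => ->; case: (ord3P j) => ->; rewrite ?bk ?ck ?mul0r ?mulr0 // key.
Qed.

Lemma other2 (k : 'I_3) : exists x y : 'I_3,
  [/\ x != y, x != k, y != k & forall i, [\/ i = x, i = y | i = k]].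
Proof.
case: (ord3P k) => ->.
- exists i1, i2; split => // i; case: (ord3P i) => ->; by [constructor 3|constructor 1|constructor 2].
- exists i0, i2; split => // i; case: (ord3P i) => ->; by [constructor 1|constructor 3|constructor 2].
- exists i0, i1; split => // i; case: (ord3P i) => ->; by [constructor 1|constructor 2|constructor 3].
Qed.


Lemma linform_delta (z : 'I_3) : linform ([ffun l => (l == z)%:R] : F) = 'X_z.
Proof.
rewrite /linform (bigD1 z) //= big1 ?addr0; first by rewrite ffunE eqxx scale1r.
by move=> l /negbTE lz; rewrite ffunE lz scale0r.
Qed.

Lemma decomp p (rho : 'I_3 -> S) : (exists i, p i != 0) -> detp (cv p) Xv rho = 0 ->
  exists u w : S, forall i, rho i = u * 'X_i + w * (p i)%:MP.
Proof.
move=> [j0 nzj] D.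
have nzpf : nzv (tof p) by exists j0; rewrite ffunE.
set kk := piv (tof p).
have pk : p kk != 0 by have := piv_neq0 nzpf; rewrite ffunE.
set c := (p kk)^-1.
set w0 := c%:MP * rho kk.
set Y := fun i => 'X_i - ('X_kk * c%:MP) * cv p i.
set r2 := fun i => rho i - w0 * cv p i.
have D2 : detp (cv p) Y r2 = 0.
  by have := detp_shift (cv p) Xv rho ('X_kk * c%:MP) w0; rewrite D.
have cpk : c * p kk = 1 by rewrite mulVf.
have Yk : Y kk = 0.
  by rewrite /Y /cv -mulrA -rmorphM cpk rmorph1 mulr1 subrr.
have cpk' : c%:MP * (p kk)%:MP = 1 :> S by rewrite -rmorphM cpk rmorph1.
have rk : r2 kk = 0.
  rewrite /r2 /w0 /cv; transitivity (rho kk * (1 - c%:MP * (p kk)%:MP)); first by ring.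
  by rewrite cpk' subrr mulr0.
have ak : cv p kk != 0 by rewrite /cv mpolyC_eq0.
have M := minor_rel D2 Yk rk ak.
have [x [y [xy xk yk Hall]]] := other2 kk.
set yv := fun z => [ffun l => (l == z)%:R - (p z / p kk) * (l == kk)%:R] : F.
have Ylin : forall z, Y z = linform (yv z).
  move=> z; rewrite (_ : yv z = [ffun j => ([ffun l => (l == z)%:R] : F) j - (p z / p kk) * ([ffun l => (l == kk)%:R] : F) j]); last by apply/ffunP => l; rewrite !ffunE.
  rewrite linform_sub.
  rewrite !linform_delta /Y /cv; congr (_ - _).
  by rewrite -mulrA -rmorphM mulrC mul_mpolyC mulrC.
have nzx : nzv (yv x) by exists x; rewrite /yv ffunE eqxx (negbTE xk) mulr0 subr0 oner_eq0.
have npxy : NP (yv x) (yv y).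
  move=> lam /(_ y); rewrite /yv !ffunE eqxx (negbTE yk) (eq_sym y x) (negbTE xy) /= !mulr0 !subr0.
  by move/eqP; rewrite ?subr0 ?mulr0 oner_eq0.
have cx : r2 x \mPo sub (yv x) = 0.
  apply: (cancel_lin nzx npxy); rewrite -Ylin -M Ylin comp_dvd //.
have [u Hu] := divP cx.
have Hy : r2 y = Y y * u.
  have Yx0 : Y x != 0 by rewrite Ylin linform_neq0.
  apply/eqP; rewrite -subr_eq0; apply/eqP; apply: (mulfI Yx0); rewrite mulr0 mulrBr M Hu -Ylin.
  by rewrite mulrCA subrr.
have Hr : forall i, r2 i = Y i * u.
  move=> i; case: (Hall i) => ->; [by rewrite Hu -Ylin | exact: Hy | by rewrite rk Yk mul0r].
exists u, (w0 - u * ('X_kk * c%:MP)) => i.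
have := Hr i; rewrite /r2 /Y /cv => /eqP; rewrite subr_eq => /eqP ->.
by ring.
Qed.


Lemma Der_ext rho rho' P : (forall i, rho i = rho' i) -> Der rho P = Der rho' P.
Proof. by move=> H; apply: eq_bigr => i _; rewrite H. Qed.

Definition Gs Lf p := [seq v <- Lf | onl p v].
Definition Hs Lf p := [seq v <- Lf | ~~ onl p v].
Definition Dp Lf p := Der (cv p) (lprod (Hs Lf p)).
Definition rho2 Lf p : 'I_3 -> S := fun i =>
  Dp Lf p * Xv i + (- ((size Lf)%:R * lprod (Hs Lf p))) * cv p i.

Lemma Der_cv_f Lf p : Der (cv p) (lprod Lf) = lprod (Gs Lf p) * Dp Lf p.
Proof.
rewrite (arr_split Lf p) DerM Der_cv_prod0 ?mul0r ?add0r //.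
by apply/allP => v; rewrite mem_filter => /andP[].
Qed.

Lemma rho2_syz Lf p : Der (rho2 Lf p) (lprod Lf) = 0.
Proof.
rewrite /rho2 Der_lincomb Euler_prod Der_cv_f {1}(arr_split Lf p) -/(Gs Lf p) -/(Hs Lf p).
by ring.
Qed.

Lemma STRUCT Lf p rho : arrF Lf -> (exists i, p i != 0) -> (0 < size Lf)%N ->
  Der rho (lprod Lf) = 0 -> detp (cv p) Xv rho = 0 ->
  exists k : S, forall i, rho i = k * rho2 Lf p i.
Proof.
move=> HL pnz dpos HD HQ.
have [nz un np] := HL.
have [u [w Hd]] := decomp pnz HQ.
set d := size Lf; set g := lprod (Gs Lf p); set h := lprod (Hs Lf p); set D := Dp Lf p.
have E : u * d%:R * h + w * D = 0.
  have gnz : g != 0.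
    by apply: lprod_neq0 => v; rewrite mem_filter => /andP[_ /nz].
  apply: (mulfI gnz); rewrite mulr0 -HD (Der_ext _ Hd) Der_lincomb Euler_prod Der_cv_f.
  rewrite (arr_split Lf p) -/(Gs Lf p) -/(Hs Lf p) -/g -/h -/D -/d.
  by ring.
have hw : exists k', w = h * k'.
  apply: proddiv.
  - by move=> v; rewrite mem_filter => /andP[_ /nz].
  - exact: filter_uniq.
  - by move=> v1 v2; rewrite !mem_filter => /andP[_ v1L] /andP[_ v2L]; apply: np.
  move=> v vH; have unH : uniq (Hs Lf p) by exact: filter_uniq.
  have := vH; rewrite mem_filter => /andP[nov vL].
  have nzv_ := nz v vL.
  set hv := lprod (rem v (Hs Lf p)).
  have Eh : h = linform v * hv by rewrite /h /lprod (big_rem _ vH).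
  set c := \sum_(i < 3) v i * p i.
  have cnz : c != 0 by move: nov; rewrite /onl /on_line.
  have ED : D = c%:MP * hv + linform v * Der (cv p) hv.
    by rewrite /D /Dp -/h Eh DerM Der_cv_lin.
  have E' : w * (c%:MP * hv) = linform v * (- (u * d%:R * hv + w * Der (cv p) hv)).
    by rewrite -[LHS]subr0 -E ED Eh; ring.
  have : (w * (c%:MP * hv)) \mPo sub v = 0 by rewrite E' comp_dvd.
  have hvc : hv \mPo sub v != 0.
    apply: lprod_comp_neq0 => // w'; rewrite mem_rem_uniq // inE => /andP[w'v w'H].
    apply: np; rewrite 1?eq_sym //.
    by move: w'H; rewrite mem_filter => /andP[_ ->].
  have cnz' : (c%:MP : S) != 0 by rewrite mpolyC_eq0.
  rewrite !compM comp_mpolyC => /eqP; rewrite !mulf_eq0.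
  by case/or3P => [/eqP // | H | H]; [move: cnz' | move: hvc]; rewrite H.
have [k' Hw] := hw.
have hnz : h != 0 by apply: lprod_neq0 => v; rewrite mem_filter => /andP[_ /nz].
have Eud : u * d%:R = - (k' * D).
  apply: (mulfI hnz); rewrite -[LHS]subr0 -E Hw; ring.
pose e : S := ((d%:R : C)^-1)%:MP.
have dnz : (d%:R : C) != 0 by rewrite pnatr_eq0 -lt0n.
have Hed : e * d%:R = 1 :> S by rewrite /e -(rmorph_nat (@mpolyC 3 C) d) -rmorphM mulVf // rmorph1.
have Hu : u = - (e * k' * D).
  transitivity (u * (d%:R * e)); first by rewrite [_ * e]mulrC Hed mulr1.
  by rewrite mulrA Eud; ring.
exists (- (e * k')) => i.
rewrite Hd Hu Hw /rho2 -/D -/h -/d /Xv /cv.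
transitivity (- (e * k' * D) * 'X_i + h * k' * (p i)%:MP * (e * d%:R)).
  by rewrite Hed mulr1.
by ring.
Qed.


Lemma rho2_Q Lf p : detp (cv p) Xv (rho2 Lf p) = 0.
Proof. by rewrite /detp /rho2; ring. Qed.

Lemma homM (d e n : nat) P Q : P \is d.-homog -> Q \is e.-homog -> (d + e)%N = n ->
  P * Q \is n.-homog.
Proof. by move=> HP HQ <-; apply: dhomogM. Qed.

Lemma homC (c : C) : (c%:MP : S) \is 0.-homog.
Proof. by rewrite -[c%:MP]mulr1 mul_mpolyC; apply: dhomogZ; apply: dhomog1. Qed.

Lemma homX (i : 'I_3) : ('X_i : S) \is 1.-homog.
Proof. by rewrite dhomogX; apply/eqP; exact: mdeg1. Qed.

Lemma homlin (v : 'I_3 -> C) : linform v \is 1.-homog.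
Proof.
rewrite /linform; apply: rpred_sum => i _; apply: rpredZ; exact: homX.
Qed.

Lemma homprod s : lprod s \is (size s).-homog.
Proof.
elim: s => [|v s IH]; first by rewrite /lprod big_nil dhomog1.
by rewrite /lprod big_cons; apply: (homM (homlin v) IH).
Qed.

Lemma homDer p s : Der (cv p) (lprod s) \is (size s).-1.-homog.
Proof.
elim: s => [|v s IH]; first by rewrite /lprod big_nil -(rmorph1 (@mpolyC 3 C)) DerC dhomog0.
rewrite /lprod big_cons DerM -/(lprod s) Der_cv_lin /=.
apply: rpredD; first by apply: (homM (homC _) (homprod s)).
case: s IH => [|w s] IH.
  by rewrite /lprod big_nil -(rmorph1 (@mpolyC 3 C)) DerC mulr0 dhomog0.
by apply: (homM (homlin v) IH).
Qed.

Lemma homrho2 Lf p i : rho2 Lf p i \is (size (Hs Lf p)).-homog.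
Proof.
rewrite /rho2 /Dp; apply: rpredD.
  case E: (Hs Lf p) => [|w s].
    by rewrite /lprod big_nil -(rmorph1 (@mpolyC 3 C)) DerC mul0r dhomog0.
  by apply: (homM (homDer p (w :: s)) (homX i)); rewrite addn1.
apply: (homM _ (homC _)); last by rewrite addn0.
by rewrite rpredN mulr_natl; apply: rpredMn; apply: homprod.
Qed.

Lemma homdetp p (rho : 'I_3 -> S) r : (forall i, rho i \is r.-homog) ->
  detp (cv p) Xv rho \is r.+1.-homog.
Proof.
move=> H; rewrite /detp.
have hm : forall i j k l, Xv i * rho j - Xv k * rho l \is r.+1.-homog.
  by move=> i j k l; apply: rpredB; apply: (homM (homX _) (H _)); rewrite add1n.
by apply: rpredD; [apply: rpredB|]; apply: (homM (homC _) (hm _ _ _ _)).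
Qed.

Lemma msize_hom P (d : nat) : P != 0 -> P \is d.-homog -> msize P = d.+1.
Proof.
move=> nz hP; have h2 := dhomog_msize hP.
have -> := dhomog_uniq nz hP h2.
by rewrite prednK // lt0n msize_poly_eq0.
Qed.


Lemma meval_lin p (v : 'I_3 -> C) : (linform v).@[p] = \sum_(i < 3) v i * p i.
Proof. by rewrite /linform !sum3 !mevalD !mevalZ !mevalXU. Qed.

Lemma meval_Der p P : (Der (cv p) P).@[p] = (Der Xv P).@[p].
Proof.
rewrite /Der !sum3 /cv /Xv; move: (mderiv i0 P) (mderiv i1 P) (mderiv i2 P) => a0 a1 a2.
by rewrite !mevalD !mevalM !mevalC !mevalXU.
Qed.

Lemma meval_nat p n : ((n%:R : S)).@[p] = n%:R.
Proof. by rewrite mevalMn meval1. Qed.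

Lemma size_GH Lf p : size Lf = (size (Gs Lf p) + size (Hs Lf p))%N.
Proof. by rewrite /Gs /Hs !size_filter count_predC. Qed.

Lemma rho2_nz Lf p i : p i != 0 -> (0 < size (Gs Lf p))%N -> rho2 Lf p i != 0.
Proof.
move=> pi gpos; apply/eqP => /(congr1 (meval p)).
rewrite /rho2 mevalD !mevalM mevalN mevalM meval_nat /Xv mevalXU /cv mevalC meval0.
rewrite /Dp meval_Der Euler_prod mevalM meval_nat.
set hv := (lprod (Hs Lf p)).@[p].
have hnz : hv != 0.
  rewrite /hv /lprod rmorph_prod prodf_seq_neq0; apply/allP => v vH /=.
  rewrite meval_lin; move: vH; rewrite mem_filter => /andP[+ _].
  by rewrite /onl /on_line.
rewrite (size_GH Lf p) natrD.
move=> E; have E2 : (size (Gs Lf p))%:R * hv * p i = 0 by rewrite -[RHS]oppr0 -E; ring.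
by move: E2 => /eqP; rewrite !mulf_eq0 (negbTE pi) (negbTE hnz) pnatr_eq0 eqn0Ngt gpos.
Qed.


Lemma detp_lin2 (a b x y : 'I_3 -> S) (s t : S) :
  detp a b (fun i => s * x i + t * y i) = s * detp a b x + t * detp a b y.
Proof. by rewrite /detp; ring. Qed.

Lemma main_F (Lf : seq F) p r : arrF Lf -> (exists i, p i != 0) ->
  (2 <= size (Gs Lf p))%N -> mdr_is (lprod Lf) r ->
  let d := size Lf in let m := size (Gs Lf p) in
  r = (d - m)%N \/
  ((r < d - m)%N /\
   (((r < m)%N /\ r = (m - 1)%N /\ (2 * m < d + 1)%N /\
     free_with_exponents (lprod Lf) (m - 1) (d - m)) \/
    ((m <= r)%N /\ (r < d - m)%N /\ (2 * m < d)%N))).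
Proof.
move=> HL [i1' pi1] m2 [[rho1 [hom1 [syz1 [j nz1]]]] minr] d m.
have syz1' : Der rho1 (lprod Lf) = 0 by exact: syz1.
have dm : size (Hs Lf p) = (d - m)%N by rewrite /d (size_GH Lf p) addKn.
have dpos : (0 < size Lf)%N by rewrite (size_GH Lf p); lia.
have hom2 : forall i, rho2 Lf p i \is (d - m).-homog by move=> i; rewrite -dm homrho2.
have nz2 : rho2 Lf p i1' != 0 by apply: rho2_nz => //; lia.
have syz2 : Der (rho2 Lf p) (lprod Lf) = 0 := rho2_syz Lf p.
have rle : (r <= d - m)%N.
  rewrite leqNgt; apply/negP => lt.
  by move: nz2; rewrite (minr _ lt (rho2 Lf p) hom2 syz2 i1') eqxx.
have [req|rlt] := eqVneq r (d - m)%N; first by left.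
have {rle rlt} rlt : (r < d - m)%N by rewrite ltn_neqAle rlt rle.
right; split => //.
have [nz un np] := HL.
have gnz : lprod (Gs Lf p) != 0 by apply: lprod_neq0 => v; rewrite mem_filter => /andP[_ /nz].
have [q Hq] := Q_div p HL syz1'.
have Q1nz : detp (cv p) Xv rho1 != 0.
  apply/eqP => Q0.
  have [k Hk] := STRUCT HL (ex_intro _ i1' pi1) dpos syz1' Q0.
  have knz : k != 0 by apply: contraNneq nz1 => k0; rewrite Hk k0 mul0r.
  have r2nz : rho2 Lf p j != 0 by apply: contraNneq nz1 => k0; rewrite Hk k0 mulr0.
  have := msize_hom nz1 (hom1 j); rewrite Hk msizeM // (msize_hom r2nz (hom2 j)).
  have : (0 < msize k)%N by rewrite lt0n msize_poly_eq0.
  by move: rlt; case: (msize k) => // n; lia.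
have qnz : q != 0 by apply: contraNneq Q1nz => q0; rewrite Hq q0 mulr0.
have sQ := msize_hom Q1nz (homdetp p hom1).
have sg := msize_hom gnz (homprod (Gs Lf p)).
move: sQ; rewrite Hq msizeM // sg -/m => sQ.
have qpos : (0 < msize q)%N by rewrite lt0n msize_poly_eq0.
have mler : (m <= r.+1)%N by move: sQ qpos; case: (msize q) => // n; lia.
have [rm|mr] := ltnP r m; last by right; split => //; lia.
left.
have rE : r = (m - 1)%N by lia.
do 3! (split; first lia).
have sq1 : msize q = 1%N by move: sQ qpos rm; case: (msize q) => // n; lia.
have qC := msize1_polyC (eq_leq sq1).
set c := q@_0 in qC.
have cnz : c != 0 by apply: contraNneq qnz => c0; rewrite qC c0 raddf0.
have cinv : ((c^-1)%:MP * c%:MP : S) = 1 by rewrite -rmorphM mulVf // rmorph1.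
split; first lia.
exists rho1, (rho2 Lf p); split.
- by split => // i; rewrite -rE.
- by [].
- move=> rho syz.
  have syz' : Der rho (lprod Lf) = 0 by exact: syz.
  have [q' Hq'] := Q_div p HL syz'.
  set a := ((c^-1)%:MP * q').
  set rho' := fun i => 1 * rho i + (- a) * rho1 i.
  have syzr : Der rho' (lprod Lf) = 0 by rewrite /rho' Der_lincomb syz' syz1' !mulr0 addr0.
  have Qr : detp (cv p) Xv rho' = 0.
    rewrite /rho' detp_lin2 Hq Hq' qC /a.
    transitivity (lprod (Gs Lf p) * q' * (1 - (c^-1)%:MP * c%:MP)); first by ring.
    by rewrite cinv subrr mulr0.
  have [k Hk] := STRUCT HL (ex_intro _ i1' pi1) dpos syzr Qr.
  exists a, k => i; have := Hk i; rewrite /rho' mul1r mulNr => /eqP.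
  by rewrite subr_eq addrC => /eqP.
- move=> h1 h2 H0.
  have E : detp (cv p) Xv (fun i => h1 * rho1 i + h2 * rho2 Lf p i) = 0.
    by rewrite /detp !H0 !mulr0 !subrr !mulr0 !addr0 subrr.
  rewrite detp_lin2 rho2_Q mulr0 addr0 Hq qC in E.
  have h10 : h1 = 0.
    apply/eqP; move/eqP: E; rewrite !mulf_eq0 (negbTE gnz) mpolyC_eq0 (negbTE cnz).
    by rewrite !orbF.
  split => //; move: (H0 i1'); rewrite h10 mul0r add0r => /eqP.
  by rewrite mulf_eq0 (negbTE nz2) orbF => /eqP.
Qed.

End Dev.

Theorem theorem1p2 (R : realType) (L : seq ('I_3 -> complex R))
    (p : 'I_3 -> complex R) (r : nat) :
  is_line_arrangement L ->
  is_intersection_point L p ->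
  let d := size L in
  let m := mult_pt L p in
  mdr_is (arr_poly L) r ->
  r = (d - m)%N \/
  ((r < d - m)%N /\
   (((r < m)%N /\ r = (m - 1)%N /\ (2 * m < d + 1)%N /\
     free_with_exponents (arr_poly L) (m - 1) (d - m)) \/
    ((m <= r)%N /\ (r < d - m)%N /\ (2 * m < d)%N))).
Proof.
move=> HL [pnz m2] d m Hmdr.
have HLf := arr_arrF HL.
have Ef : arr_poly L = lprod (map (@tof R) L).
  by rewrite /arr_poly /lprod big_map; apply: eq_bigr => v _; rewrite linform_tof.
have Hm : m = size (Gs (map (@tof R) L) p).
  rewrite /m /mult_pt /Gs size_filter count_map; apply: eq_count => v.
  by rewrite /onl /on_line /=; congr (_ == _); apply: eq_bigr => i _; rewrite ffunE.
have Hd : d = size (map (@tof R) L) by rewrite size_map.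
rewrite Ef in Hmdr *; rewrite Hm Hd.
apply: (main_F HLf pnz) => //; by rewrite -Hm.
Qed.
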